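(* For an oriented classical or virtual link $L$, the forbidden determinant $\det \mathcal{FM}(L)$ is an invariant of (classical and virtual) links and an invariant of link homotopy.
   Context: An oriented (classical or virtual) link with $n$ components is represented by a signed Gauss diagram: $n$ oriented circles, one per component, with arrows from over-crossing point to under-crossing point, each arrow carrying the sign $\pm1$ of its crossing; virtual links are equivalence classes of such diagrams under Gauss-diagram Reidemeister moves. Link homotopy is the equivalence relation generated by isotopy and crossing changes at crossings where a component crosses itself. The forbidden moves are: interchange two adjacent arrowheads, or two adjacent arrow tails, on a circle. Using forbidden and Reidemeister moves, a Gauss diagram can be reduced to one with no arrow having both endpoints on the same circle and in which, for each ordered pair $(j,k)$ of distinct circles, all arrows from circle $j$ to circle $k$ have the same sign. The forbidden quiver $\mathcal{FQ}(L)$ is obtained by shrinking each circle of this reduced diagram to a vertex; $m$ parallel arrows of sign $\varepsilon$ from vertex $j$ to vertex $k$ are recorded as a single arrow with integer label $\varepsilon m$. The forbidden matrix $\mathcal{FM}(L)$ is the $n\times n$ integer matrix whose $(j,k)$ entry is the label on the arrow from vertex $j$ to vertex $k$ of $\mathcal{FQ}(L)$ ($0$ if there is none), and the forbidden determinant is its determinant. *)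

(* Defs.v *)
From Stdlib Require Import Relations.
From mathcomp Require Import all_boot all_order all_algebra.
Set Implicit Arguments. Unset Strict Implicit. Unset Printing Implicit Defensive.
Import GRing.Theory Num.Theory.

(* An arrow endpoint: ((label of the arrow, is_head), sign is positive). *)
Definition letter := (nat * bool * bool)%type.
Definition lab (x : letter) : nat := x.1.1.
Definition hd (x : letter) : bool := x.1.2.
Definition pos (x : letter) : bool := x.2.

(* A signed Gauss diagram on n circles: circle i carries the cyclic word
   [D i] of arrow endpoints read along its orientation. *)
Definition gdiag (n : nat) := {ffun 'I_n -> seq letter}.

Section GD.
Variable n : nat.
Implicit Types D : gdiag n.

Definition all_letters D : seq letter := flatten [seq D i | i <- enum 'I_n].
Definition labels D : seq nat := [seq lab x | x <- all_letters D].

(* Well-formedness: every arrow has exactly one tail and one head, and both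
   endpoints carry the same sign. *)
Definition tails D := [seq (lab x, pos x) | x <- all_letters D & ~~ hd x].
Definition heads D := [seq (lab x, pos x) | x <- all_letters D & hd x].
Definition wf D : bool :=
  [&& uniq (map fst (tails D)), uniq (map fst (heads D)) &
      perm_eq (tails D) (heads D)].

Definition ins (i : 'I_n) (p : nat) (B : seq letter) D : gdiag n :=
  [ffun j => if j == i then take p (D j) ++ B ++ drop p (D j) else D j].

Definition orient (e : bool) (s : seq letter) := if e then s else rev s.

(* circles are cyclic *)
Definition rot_move D D' : Prop :=
  exists (i : 'I_n) (k : nat),
    D' = [ffun j => if j == i then rot k (D j) else D j].

Definition relab (f : nat -> nat) (x : letter) : letter := (f (lab x), hd x, pos x).
Definition relabel_move D D' : Prop :=
  exists f : nat -> nat, injective f /\ D' = [ffun j => map (relab f) (D j)].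

Definition R1_move D D' : Prop :=
  exists (i : 'I_n) (p l : nat) (b s : bool),
    l \notin labels D /\ D' = ins i p [:: (l, b, s); (l, ~~ b, s)] D.

Definition R2_move D D' : Prop :=
  exists (i j : 'I_n) (p q la lb : nat) (s b1 b2 : bool),
    [/\ la != lb, la \notin labels D, lb \notin labels D &
     D' = ins j q (orient b2 [:: (la, true, s); (lb, true, ~~ s)])
            (ins i p (orient b1 [:: (la, false, s); (lb, false, ~~ s)]) D)].

(* R3: modelled on three lines in the plane L1 : y = 0, L2 : x = 0,
   L3 : x + y = 1 (moved to x + y = -1), with base directions (1,0), (0,1),
   (1,-1), orientation signs e1 e2 e3 and distinct heights h1 h2 h3.
   The crossing P12 has label la, P13 label lb, P23 label lc.
   Sign convention: sign = sign of det(d_over, d_under). *)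
Definition R3_blocks (la lb lc : nat) (e1 e2 e3 : bool) (h1 h2 h3 : nat) :
    seq letter * seq letter * seq letter :=
  let s12 := (e1 == e2) == (h2 < h1) in
  let s13 := (e1 != e3) == (h3 < h1) in
  let s23 := (e2 != e3) == (h3 < h2) in
  (orient e1 [:: (la, h1 < h2, s12); (lb, h1 < h3, s13)],
   orient e2 [:: (la, h2 < h1, s12); (lc, h2 < h3, s23)],
   orient e3 [:: (lc, h3 < h2, s23); (lb, h3 < h1, s13)]).

Definition ins3 (c1 c2 c3 : 'I_n) (p1 p2 p3 : nat)
    (B : seq letter * seq letter * seq letter) D0 : gdiag n :=
  ins c3 p3 B.2 (ins c2 p2 B.1.2 (ins c1 p1 B.1.1 D0)).

Definition R3_move D D' : Prop :=
  exists (D0 : gdiag n) (c1 c2 c3 : 'I_n) (p1 p2 p3 la lb lc h1 h2 h3 : nat)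
         (e1 e2 e3 : bool),
    [/\ uniq [:: la; lb; lc], all (fun l => l \notin labels D0) [:: la; lb; lc],
        uniq [:: h1; h2; h3],
        D = ins3 c1 c2 c3 p1 p2 p3 (R3_blocks la lb lc e1 e2 e3 h1 h2 h3) D0 &
        D' = ins3 c1 c2 c3 p1 p2 p3
               (let B := R3_blocks la lb lc e1 e2 e3 h1 h2 h3 in
                (rev B.1.1, rev B.1.2, rev B.2)) D0].

Definition reid_move D D' : Prop :=
  rot_move D D' \/ relabel_move D D' \/ R1_move D D' \/ R2_move D D' \/ R3_move D D'.

Definition forbidden_move D D' : Prop :=
  exists (i : 'I_n) (u v : seq letter) (x y : letter),
    [/\ hd x = hd y, D i = u ++ x :: y :: v &
        D' = [ffun j => if j == i then u ++ y :: x :: v else D j]].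

Definition cc (l : nat) (x : letter) : letter :=
  if lab x == l then (lab x, ~~ hd x, ~~ pos x) else x.
Definition self_cc_move D D' : Prop :=
  exists (i : 'I_n) (l : nat),
    count (fun x => lab x == l) (D i) = 2 /\ D' = [ffun j => map (cc l) (D j)].

Definition restrict (R : gdiag n -> gdiag n -> Prop) D D' : Prop :=
  [/\ wf D, wf D' & R D D'].

Definition virt_equiv := clos_refl_sym_trans (gdiag n) (restrict reid_move).
Definition homotopy_equiv :=
  clos_refl_sym_trans (gdiag n)
    (restrict (fun D D' => reid_move D D' \/ self_cc_move D D')).
Definition fw_equiv :=
  clos_refl_sym_trans (gdiag n)
    (restrict (fun D D' => reid_move D D' \/ forbidden_move D D')).

Definition arrow_from D (j k : 'I_n) (l : nat) (s : bool) : bool :=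
  ((l, false, s) \in D j) && ((l, true, s) \in D k).

Definition reduced D : Prop :=
  [/\ wf D,
      forall j l s, ~~ arrow_from D j j l s &
      forall j k l1 s1 l2 s2,
        arrow_from D j k l1 s1 -> arrow_from D j k l2 s2 -> s1 = s2].

(* forbidden matrix: (j,k) entry = signed number of arrows from j to k
   (for a reduced diagram this is the label eps*m, and 0 on the diagonal) *)
Definition FM D : 'M[int]_n :=
  (\matrix_(j, k)
    \sum_(x <- D j | ~~ hd x && has (fun y => (lab y == lab x) && hd y) (D k))
      (if pos x then 1 else -1 : int))%R.

End GD.

(* Main.v *)
Require Import Defs.
From Stdlib Require Import Relations.
From mathcomp Require Import all_boot all_order all_algebra.
From mathcomp Require Import zify.
Set Implicit Arguments. Unset Strict Implicit. Unset Printing Implicit Defensive.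
Import GRing.Theory Num.Theory.


Definition F (s t : seq letter) : int :=
  (\sum_(x <- s | ~~ hd x && has (fun y => (lab y == lab x) && hd y) t)
      (if pos x then 1 else -1 : int))%R.

Definition disj (s t : seq letter) := forall x y, x \in s -> y \in t -> lab x != lab y.

Lemma F_perm s s' t t' : perm_eq s s' -> perm_eq t t' -> F s t = F s' t'.
Proof.
move=> ps pt; rewrite /F (perm_big _ ps) /=; apply: eq_bigl => x.
by rewrite (eq_has_r (perm_mem pt)).
Qed.

Lemma F_nil_r s : F s [::] = 0%R.
Proof. by rewrite /F big1 // => x; rewrite andbF. Qed.

Lemma F_nil_l t : F [::] t = 0%R.
Proof. by rewrite /F big_nil. Qed.

Lemma F_heads s t : all hd s -> F s t = 0%R.
Proof.
move=> /allP H; rewrite /F big_seq_cond big1 // => x /andP [xs /andP [nh _]].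
by move: nh; rewrite H.
Qed.

Lemma F_ins Es s Et t : disj Es t -> disj s Et ->
  F (Es ++ s) (Et ++ t) = (F Es Et + F s t)%R.
Proof.
move=> d1 d2; rewrite /F big_cat /=; congr (_ + _)%R.
  rewrite big_seq_cond [RHS]big_seq_cond; apply: eq_bigl => x.
  case Hx: (x \in Es) => //=; rewrite has_cat.
  have -> : has (fun y => (lab y == lab x) && hd y) t = false.
    apply/hasP => [[y Hy /andP [/eqP E _]]].
    by move: (d1 x y Hx Hy); rewrite E eqxx.
  by rewrite orbF.
rewrite big_seq_cond [RHS]big_seq_cond; apply: eq_bigl => x.
case Hx: (x \in s) => //=; rewrite has_cat.
have -> : has (fun y => (lab y == lab x) && hd y) Et = false.
  apply/hasP => [[y Hy /andP [/eqP E _]]].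
  by move: (d2 x y Hx Hy); rewrite E eqxx.
by [].
Qed.

Section Inv.
Variable n : nat.
Implicit Types D : gdiag n.

Definition Inv D1 D2 := forall j k : 'I_n, j != k -> F (D1 j) (D1 k) = F (D2 j) (D2 k).

Lemma step_insert D D' (E : 'I_n -> seq letter) :
  (forall k, perm_eq (D' k) (E k ++ D k)) ->
  (forall j k, disj (E j) (D k)) -> (forall j k, disj (D j) (E k)) ->
  (forall j k, j != k -> F (E j) (E k) = 0%R) -> Inv D' D.
Proof.
move=> P d1 d2 E0 j k jk.
by rewrite (F_perm (P j) (P k)) F_ins // E0 // add0r.
Qed.

Lemma step_perm D D' : (forall k, perm_eq (D' k) (D k)) -> Inv D' D.
Proof.
move=> P; apply: (@step_insert D D' (fun _ => [::])) => //.
by move=> j k; rewrite F_nil_l.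
Qed.

Lemma perm_ins (i : 'I_n) p B D k :
  perm_eq (ins i p B D k) (if k == i then B ++ D k else D k).
Proof.
rewrite /ins ffunE; case: (k == i) => //.
by rewrite perm_catCA cat_take_drop.
Qed.

Lemma mem_all D k y : y \in D k -> y \in all_letters D.
Proof.
move=> Hy; apply/flattenP; exists (D k) => //.
by apply: map_f; rewrite mem_enum.
Qed.

Lemma lab_labels D k y : y \in D k -> lab y \in labels D.
Proof. by move=> Hy; apply: map_f; apply: mem_all Hy. Qed.

End Inv.

Section Moves.
Variable n : nat.
Implicit Types D : gdiag n.

Lemma rot_inv D D' : rot_move D D' -> Inv D' D.
Proof.
move=> [i [k ->]]; apply: step_perm => j; rewrite ffunE.
by case: (j == i) => //; rewrite perm_rot.
Qed.

Lemma forb_inv D D' : forbidden_move D D' -> Inv D' D.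
Proof.
move=> [i [u [v [x [y [_ Di ->]]]]]]; apply: step_perm => j; rewrite ffunE.
case: eqP => [->|//]; rewrite Di perm_cat2l.
by apply/permP => p /=; lia.
Qed.

Lemma relab_inv D D' : relabel_move D D' -> Inv D' D.
Proof.
move=> [f [finj ->]] j k _; rewrite !ffunE /F big_map; apply: eq_bigl => x /=.
rewrite has_map; congr (_ && _); apply: eq_has => y /=.
by rewrite /relab /lab /= inj_eq.
Qed.

Lemma orient_perm b (s : seq letter) : perm_eq (orient b s) s.
Proof. by case: b; rewrite /orient // perm_rev. Qed.

Lemma mem_orient b (s : seq letter) x : (x \in orient b s) = (x \in s).
Proof. by case: b; rewrite /orient // mem_rev. Qed.

Lemma R1_inv D D' : R1_move D D' -> Inv D' D.
Proof.
move=> [i [p [l [b [s [Hl ->]]]]]].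
apply: (@step_insert _ D _ (fun k => if k == i then [:: (l, b, s); (l, ~~ b, s)] else [::])).
- by move=> k; apply: perm_trans (perm_ins i p _ D k) _; case: (k == i).
- move=> j k x y; case: (j == i); last by rewrite in_nil.
  rewrite !inE => /orP [] /eqP -> Hy;
  apply/negP => /eqP E; move/negP: Hl; apply; move: (lab_labels Hy); rewrite -E => H; exact H.
- move=> j k x y Hx; case: (k == i); last by rewrite in_nil.
  rewrite !inE => /orP [] /eqP -> /=;
  apply/negP => /eqP E; move/negP: Hl; apply; move: (lab_labels Hx); rewrite E => H; exact H.
- move=> j k jk; case: eqP => [ej|_]; last by rewrite F_nil_l.
  by subst j; rewrite eq_sym (negbTE jk) F_nil_r.
Qed.

Lemma R3_inv D D' : R3_move D D' -> Inv D' D.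
Proof.
move=> [D0 [c1 [c2 [c3 [p1 [p2 [p3 [la [lb [lc [h1 [h2 [h3 [e1 [e2 [e3 [_ _ _ -> ->]]]]]]]]]]]]]]]]].
have gen : forall (c : 'I_n) p p' X X' (A A' : gdiag n), perm_eq X X' ->
    (forall k, perm_eq (A k) (A' k)) -> forall k, perm_eq (ins c p X A k) (ins c p' X' A' k).
  move=> c p p' X X' A A' PX PA k'.
  apply: perm_trans (perm_ins c p X A k') _; rewrite perm_sym.
  apply: perm_trans (perm_ins c p' X' A' k') _; rewrite perm_sym.
  by case: (k' == c) => //; apply: perm_cat.
apply: step_perm; rewrite /ins3.
eapply gen; first by rewrite /= perm_rev.
eapply gen; first by rewrite /= perm_rev.
eapply gen; first by rewrite /= perm_rev.
by move=> ?; exact: perm_refl.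
Qed.

End Moves.

Section Moves2.
Variable n : nat.
Implicit Types D : gdiag n.

Lemma fresh_neq D k y l : l \notin labels D -> y \in D k -> lab y != l.
Proof. by move=> Hl Hy; apply: contraNneq Hl => <-; exact: lab_labels Hy. Qed.

Lemma R2_inv D D' : R2_move D D' -> Inv D' D.
Proof.
move=> [i [j [p [q [la [lb [s [b1 [b2 [nab Hla Hlb ->]]]]]]]]]].
set H := orient b2 _; set T := orient b1 _.
pose E k := (if k == j then H else [::]) ++ (if k == i then T else [::]).
have HH x : x \in H -> (lab x == la) || (lab x == lb).
  by rewrite mem_orient !inE => /orP [] /eqP -> /=; rewrite eqxx ?orbT.
have HT x : x \in T -> (lab x == la) || (lab x == lb).
  by rewrite mem_orient !inE => /orP [] /eqP -> /=; rewrite eqxx ?orbT.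
have HE k x : x \in E k -> (lab x == la) || (lab x == lb).
  rewrite mem_cat => /orP []; case: ifP => _; rewrite ?in_nil //; [exact: HH| exact: HT].
apply: (@step_insert _ D _ E).
- move=> k; apply: perm_trans (perm_ins j q H _ k) _.
  rewrite /E; case: (k == j) => /=; first rewrite -catA perm_cat2l;
  apply: perm_trans (perm_ins i p T D k) _; case: (k == i) => /=; exact: perm_refl.
- move=> a b x y /HE Hx Hy; apply/negP => /eqP Exy; move: Hx; rewrite Exy.
  by rewrite (negbTE (fresh_neq Hla Hy)) (negbTE (fresh_neq Hlb Hy)).
- move=> a b x y Hx /HE Hy; apply/negP => /eqP Exy; move: Hy; rewrite -Exy.
  by rewrite (negbTE (fresh_neq Hla Hx)) (negbTE (fresh_neq Hlb Hx)).
- move=> a b ab; rewrite /E.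
  case: (eqVneq b j) => [eb|nbj]; case: (eqVneq b i) => [eb'|nbi];
  case: (eqVneq a j) => [ea|naj]; case: (eqVneq a i) => [ea'|nai];
  rewrite /= ?cats0 ?F_nil_l ?F_nil_r //; subst;
  try by (move: ab; rewrite ?eqxx).
  + rewrite (F_perm (orient_perm _ _) (orient_perm _ _)) /F !big_cons big_nil /=.
    rewrite eqxx (negbTE nab) eq_sym (negbTE nab) eqxx /=.
    clear HE; clear E HH HT; clear H T.
    by case: s; rewrite /= ?addr0 ?subrr // addrC subrr.
  + by apply: F_heads; apply/allP => x; rewrite mem_orient !inE => /orP [] /eqP ->.
Qed.

End Moves2.

Section Moves3.
Variable n : nat.
Implicit Types D : gdiag n.

Lemma count_all D (p : pred letter) :
  count p (all_letters D) = \sum_(m < n) count p (D m).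
Proof.
by rewrite /all_letters count_flatten sumnE -map_comp big_map big_enum.
Qed.

Lemma count_split (a : pred letter) s :
  count a s = count a [seq x <- s | hd x] + count a [seq x <- s | ~~ hd x].
Proof.
elim: s => //= x s ->; case: (hd x) => /=; case: (a x) => /=; lia.
Qed.

Lemma count_lab_le2 D l : wf D ->
  count (fun x => lab x == l) (all_letters D) <= 2.
Proof.
move=> /and3P [ut uh _].
have h1 : count (pred1 l) (map fst (heads D)) <= 1 by rewrite count_uniq_mem // leq_b1.
have t1 : count (pred1 l) (map fst (tails D)) <= 1 by rewrite count_uniq_mem // leq_b1.
move: h1 t1; rewrite /heads /tails -!map_comp !count_map.
rewrite (count_split _ (all_letters D)).
have e : preim (fst \o (fun x : letter => (lab x, pos x))) (pred1 l) =1 (fun x => lab x == l) by [].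
rewrite !(eq_count e); lia.
Qed.

Lemma cc_other D i l k y : wf D -> count (fun x => lab x == l) (D i) = 2 ->
  k != i -> y \in D k -> lab y != l.
Proof.
move=> wD ci ki Hy; have := count_lab_le2 l wD.
rewrite count_all (bigD1 i) //= (bigD1 k) /=; last by rewrite ki.
rewrite ci; apply: contraTneq => E.
have : 0 < count (fun x => lab x == l) (D k).
  by rewrite -has_count; apply/hasP; exists y => //; rewrite E.
lia.
Qed.

Lemma lab_cc l x : lab (cc l x) = lab x.
Proof. by rewrite /cc; case: ifP. Qed.

Lemma cc_inv D D' : wf D -> self_cc_move D D' -> Inv D' D.
Proof.
move=> wD [i [l [ci ->]]] j k jk; rewrite !ffunE.
have other m : m != i -> map (cc l) (D m) = D m.
  move=> mi; rewrite -[RHS]map_id; apply/eq_in_map => y Hy.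
  by rewrite /cc (negbTE (cc_other wD ci mi Hy)).
case: (eqVneq j i) => [ej|nji]; case: (eqVneq k i) => [ek|nki].
- by move: jk; rewrite ej ek eqxx.
- subst j; rewrite (other k nki) /F big_map big_seq_cond [RHS]big_seq_cond.
  have nh : forall z, has (fun y => (lab y == z) && hd y) (D k) -> z != l.
    move=> z /hasP [y Hy /andP [/eqP <- _]]; exact: cc_other wD ci nki Hy.
  apply: eq_big => x.
    case Hx: (x \in D i) => //=.
    case: (eqVneq (lab x) l) => [El|Nl].
      rewrite lab_cc.
      case: (has _ (D k)) / idP => [/nh|]; first by rewrite El eqxx.
      by rewrite !andbF.
    by rewrite /cc (negbTE Nl).
  move=> /andP [Hx /andP [_ Hh]]; move: Hh; rewrite lab_cc => /nh Nl.
  by rewrite /cc (negbTE Nl).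
- subst k; rewrite (other j nji) /F big_seq_cond [RHS]big_seq_cond.
  apply: eq_bigl => x; case Hx: (x \in D j) => //=; congr (_ && _).
  rewrite has_map; apply: eq_has => y /=; rewrite /cc.
  case: ifP => // /eqP Ey; rewrite /lab /= -/(lab y) Ey.
  have := cc_other wD ci nji Hx; rewrite eq_sym => /negbTE ->.
  by [].
- by rewrite (other j nji) (other k nki).
Qed.


End Moves3.

Lemma uniq_fst (s : seq (nat * bool)) a b :
  uniq (map fst s) -> a \in s -> b \in s -> a.1 = b.1 -> a = b.
Proof.
elim: s => //= c s IH /andP [nc us]; rewrite !inE.
move=> /orP [/eqP ->|Ha] /orP [/eqP ->|Hb] // E.
- by move: nc; rewrite E (map_f fst Hb).
- by move: nc; rewrite -E (map_f fst Ha).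
- exact: IH.
Qed.

Section Fin.
Variable n : nat.
Implicit Types D : gdiag n.

Lemma diag0 D j : reduced D -> F (D j) (D j) = 0%R.
Proof.
move=> [wD noself _]; rewrite /F big_seq_cond big1 //.
move=> [[lx hx] px] /andP [Hx /andP [nh /hasP [[[ly hy] py] Hy /andP [/eqP Ely hy']]]].
rewrite /lab /hd /= in nh Ely hy'; subst ly; move: hy' Hy; case: hy => // _ Hy; move: nh Hx; case: hx => // _ Hx.
move: wD => /and3P [_ uh P].
have Tx : (lx, px) \in tails D.
  by apply/mapP; exists (lx, false, px) => //; rewrite mem_filter /= (mem_all Hx).
have Hy' : (lx, py) \in heads D.
  by apply/mapP; exists (lx, true, py) => //; rewrite mem_filter /= (mem_all Hy).
rewrite (perm_mem P) in Tx.
have [] := uniq_fst uh Tx Hy' erefl => Ep; subst py.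
by move/negP: (noself j lx px); rewrite /arrow_from Hx Hy.
Qed.

Lemma Inv_refl D : Inv D D. Proof. by []. Qed.
Lemma Inv_sym D1 D2 : Inv D1 D2 -> Inv D2 D1.
Proof. by move=> H j k jk; rewrite H. Qed.
Lemma Inv_trans D1 D2 D3 : Inv D1 D2 -> Inv D2 D3 -> Inv D1 D3.
Proof. by move=> H1 H2 j k jk; rewrite H1 // H2. Qed.

Lemma Inv_clos (R : gdiag n -> gdiag n -> Prop) :
  (forall D D', R D D' -> Inv D D') ->
  forall D D', clos_refl_sym_trans (gdiag n) R D D' -> Inv D D'.
Proof.
move=> HR D D'; elim => [x y /HR //|x|x y _ /Inv_sym //|x y z _ H1 _ H2].
- exact: Inv_refl.
- exact: Inv_trans H1 H2.
Qed.

Lemma reid_inv D D' : reid_move D D' -> Inv D D'.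
Proof.
move=> H; apply: Inv_sym.
case: H => [/rot_inv|[/relab_inv|[/R1_inv|[/R2_inv|/R3_inv]]]] //.
Qed.

Lemma fw_inv D D' : fw_equiv D D' -> Inv D D'.
Proof.
apply: Inv_clos => D1 D2 [_ _ [/reid_inv //|/forb_inv /Inv_sym //]].
Qed.

Lemma virt_inv D D' : virt_equiv D D' -> Inv D D'.
Proof. apply: Inv_clos => D1 D2 [_ _ /reid_inv //]. Qed.

Lemma homot_inv D D' : homotopy_equiv D D' -> Inv D D'.
Proof.
apply: Inv_clos => D1 D2 [w1 _ [/reid_inv //|/(cc_inv w1) /Inv_sym //]].
Qed.

Lemma FM_eq D1 D2 R1 R2 : Inv D1 D2 ->
  fw_equiv D1 R1 -> reduced R1 -> fw_equiv D2 R2 -> reduced R2 ->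
  FM R1 = FM R2.
Proof.
move=> H12 H1 r1 H2 r2; apply/matrixP => j k; rewrite !mxE.
case: (eqVneq j k) => [<-|jk].
  by have := diag0 j r1; have := diag0 j r2; rewrite /F => -> ->.
have := Inv_trans (Inv_trans (Inv_sym (fw_inv H1)) H12) (fw_inv H2) jk.
by rewrite /F.
Qed.

End Fin.

Theorem mainTheorem4 (n : nat) :
  (forall D1 D2 R1 R2 : gdiag n,
      wf D1 -> wf D2 -> virt_equiv D1 D2 ->
      fw_equiv D1 R1 -> reduced R1 -> fw_equiv D2 R2 -> reduced R2 ->
      (\det (FM R1) = \det (FM R2))%R) /\
  (forall D1 D2 R1 R2 : gdiag n,
      wf D1 -> wf D2 -> homotopy_equiv D1 D2 ->
      fw_equiv D1 R1 -> reduced R1 -> fw_equiv D2 R2 -> reduced R2 ->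
      (\det (FM R1) = \det (FM R2))%R).
Proof.
split=> D1 D2 R1 R2 _ _ H12 H1 r1 H2 r2.
  by rewrite (FM_eq (virt_inv H12) H1 r1 H2 r2).
by rewrite (FM_eq (homot_inv H12) H1 r1 H2 r2).
Qed.
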